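(* Let $h>0$, $0<\alpha\le 0.1$, and let $\overline S=\{(kh,h):k\in\mathbb Z\}\subseteq S$ be the camera grid of resolution $\delta_d=h$. For every target $g\in G$, $$\overline\varepsilon(g)\;\le\;1.72\,\varepsilon(g,S),\qquad\text{where }\ \overline\varepsilon(g)=\min_{s_i,s_j\in\overline S}\varepsilon(g,\{s_i,s_j\}).$$
   Context: Work in $\mathbb{R}^2$ with coordinates $(x,z)$. The ground line is $G=\{z=0\}$ and the viewing line is $S=\{z=h\}$. For a point $s$ and unit vector $u$, the wedge $W(s,u)=\{s+rv:\ r\ge0,\ |v|=1,\ \angle(v,u)\le\alpha\}$ (opening angle $2\alpha$). For target $g$ and camera $s$, $\mathcal W(g,s)$ is the set of all wedges $W(s,u)$ containing $g$. For $C\subseteq S$, $\varepsilon(g,C)=\sup\{\operatorname{diam}(\bigcap_{s\in C}W_s): W_s\in\mathcal W(g,s)\ \forall s\in C\}$. *)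

(* Defs.v *)
From Stdlib Require Import Reals Lra.
Open Scope R_scope.

Definition pt := (R * R)%type.

Definition dot (a b : pt) : R := fst a * fst b + snd a * snd b.
Definition norm (a : pt) : R := sqrt (dot a a).
Definition dist (a b : pt) : R := norm (fst a - fst b, snd a - snd b).

(* Angle between two unit vectors. *)
Definition angle (v u : pt) : R := acos (dot v u).

Definition ground (g : pt) : Prop := snd g = 0.
Definition viewline (h : R) (s : pt) : Prop := snd s = h.

Definition wedge (alpha : R) (s u : pt) (p : pt) : Prop :=
  exists r v, 0 <= r /\ norm v = 1 /\ angle v u <= alpha /\
    p = (fst s + r * fst v, snd s + r * snd v).

Definition admissible (alpha : R) (g s u : pt) : Prop :=
  norm u = 1 /\ wedge alpha s u g.

Definition diam_le (A : pt -> Prop) (c : R) : Prop :=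
  forall p q, A p -> A q -> dist p q <= c.

(* eps(g,C) <= c, where eps(g,C) is the supremum over all admissible
   choices (W_s)_{s in C} (encoded by the axis map u) of diam(cap_{s in C} W_s). *)
Definition eps_le (alpha : R) (g : pt) (C : pt -> Prop) (c : R) : Prop :=
  forall u : pt -> pt,
    (forall s, C s -> admissible alpha g s (u s)) ->
    diam_le (fun p => forall s, C s -> wedge alpha s (u s) p) c.

Definition grid (h : R) (s : pt) : Prop := exists k : Z, s = (IZR k * h, h).

Definition pair_set (a b : pt) (s : pt) : Prop := s = a \/ s = b.

(* Main.v *)
Require Import Defs.
From Stdlib Require Import Reals Lra Psatz.
Open Scope R_scope.

Lemma sec_id (u v e : R) :
  (1+v^2)*(u-e)^2 - (1+u^2)*(v-e)^2 = (u-v)*((1+u*e)*(v-e) + (1+v*e)*(u-e)).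
Proof. ring. Qed.

Lemma range_of (S C g t : R) : 0 < S -> 0 < C -> 0 < C + S*g -> 0 < C - S*g ->
  C * Rabs (t - g) <= S * (1 + t*g) ->
  (C*g - S)/(C + S*g) <= t <= (C*g + S)/(C - S*g).
Proof.
  intros HS HC H1 H2 H.
  assert (Ha : C*(t-g) <= S*(1+t*g)) by (pose proof (Rle_abs (t-g)); nra).
  assert (Hb : C*(g-t) <= S*(1+t*g)) by (pose proof (Rle_abs (-(t-g))); rewrite Rabs_Ropp in *; nra).
  split.
  - apply (Rmult_le_reg_r (C + S*g)); [lra|]. field_simplify; [|lra]. nra.
  - apply (Rmult_le_reg_r (C - S*g)); [lra|]. field_simplify; [|lra]. nra.
Qed.

Lemma final_num (S y : R) : 0 < S -> S <= 1/5 -> 0 <= y -> y <= 1/4 ->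
  (4 + y^2) * ((1+S)^4 + y) <= 4 * (172/100)^2 * (1+S)^2 * (1 - 2*S^2 - S*y)^4.
Proof.
  intros HS HS2 Hy Hy2.
  assert (Hw : 0 < 1 - 2*S^2 - S*y) by nra.
  assert (HA : (4 + y^2) * ((1+S)^4 + y) <= (4 + 1/16) * ((1+S)^4 + 1/4)).
  { apply Rmult_le_compat; nra. }
  assert (HB : (1 - 2*S^2 - S/4)^4 <= (1 - 2*S^2 - S*y)^4).
  { assert (0 < 1 - 2*S^2 - S/4) by nra.
    apply pow_incr; split; nra. }
  assert (HP : 0 < (1+S)^2) by nra.
  destruct (Rle_lt_dec S (1/10)) as [Hs|Hs].
  - assert (H1 : (4 + 1/16) * ((1+S)^4 + 1/4) <= (4+1/16)*((1+S)^2*(121/100) + 1/4 * (1+S)^2)).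
    { apply Rmult_le_compat_l; [lra|]. assert ((1+S)^2 <= 121/100) by nra.
      assert (1 <= (1+S)^2) by nra.
      replace ((1+S)^4) with ((1+S)^2*(1+S)^2) by ring. nra. }
    assert (H2 : 9 / 10 <= 1 - 2*S^2 - S/4) by nra.
    assert (H3 : (9/10)^4 <= (1 - 2*S^2 - S/4)^4) by (apply pow_incr; lra).
    assert (H4 : 4 * (172/100)^2 * (1+S)^2 * (9/10)^4 <= 4 * (172/100)^2 * (1+S)^2 * (1 - 2*S^2 - S*y)^4).
    { apply Rmult_le_compat_l; [nra|]. lra. }
    nra.
  - assert (H1 : (4 + 1/16) * ((1+S)^4 + 1/4) <= (4+1/16)*((1+S)^2*(144/100) + 1/4 * (1+S)^2 * (100/121))).
    { apply Rmult_le_compat_l; [lra|]. assert ((1+S)^2 <= 144/100) by nra.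
      assert (121/100 <= (1+S)^2) by nra.
      replace ((1+S)^4) with ((1+S)^2*(1+S)^2) by ring.
      assert (1/4 <= 1/4 * (1+S)^2*(1+S)^2 * (100/121)) by nra. nra. }
    assert (H2 : 87 / 100 <= 1 - 2*S^2 - S/4) by nra.
    assert (H3 : (87/100)^4 <= (1 - 2*S^2 - S/4)^4) by (apply pow_incr; lra).
    assert (H4 : 4 * (172/100)^2 * (1+S)^2 * (87/100)^4 <= 4 * (172/100)^2 * (1+S)^2 * (1 - 2*S^2 - S*y)^4).
    { apply Rmult_le_compat_l; [nra|]. lra. }
    nra.
Qed.

Section Core.
Variables S C x0 t1 t2 s1 s2 : R.
Hypothesis HS : 0 < S.
Hypothesis HS2 : S <= 1/5.
Hypothesis HC : 0 < C.
Hypothesis HSC : S^2 + C^2 = 1.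
Hypothesis Hx : -1/2 <= x0 <= 1/2.
Let g1 := 1 + x0.
Let g2 := x0 - 1.
Hypothesis Ht1 : C * Rabs (t1 - g1) <= S * (1 + t1*g1).
Hypothesis Hs1 : C * Rabs (s1 - g1) <= S * (1 + s1*g1).
Hypothesis Ht2 : C * Rabs (t2 - g2) <= S * (1 + t2*g2).
Hypothesis Hs2 : C * Rabs (s2 - g2) <= S * (1 + s2*g2).
Hypothesis Hd1 : (t1-s1)^2 <= S^2*(1+t1^2)*(1+s1^2).
Hypothesis Hd2 : (t2-s2)^2 <= S^2*(1+t2^2)*(1+s2^2).

Lemma C_big : 9/10 < C.
Proof. nra. Qed.

Let e1 := C + S*g1.
Let f1 := C - S*g1.
Let e2 := C + S*g2.
Let f2 := C - S*g2.
Let L1 := (C*g1 - S)/e1.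
Let H1 := (C*g1 + S)/f1.
Let L2 := (C*g2 - S)/e2.
Let H2 := (C*g2 + S)/f2.

Lemma pos_e : 0 < e1 /\ 0 < f1 /\ 0 < e2 /\ 0 < f2.
Proof. pose proof C_big. unfold e1,f1,e2,f2,g1,g2. repeat split; nra. Qed.

Lemma rng : L1 <= t1 <= H1 /\ L1 <= s1 <= H1 /\ L2 <= t2 <= H2 /\ L2 <= s2 <= H2.
Proof.
  destruct pos_e as (A&B&D&E).
  repeat split; try apply (range_of S C g1); try apply (range_of S C g2); auto.
Qed.

Lemma sgn : 0 < L1 /\ 0 < H1 /\ L2 < 0 /\ H2 < 0.
Proof.
  pose proof C_big. destruct pos_e as (A&B&D&E).
  unfold L1,H1,L2,H2,g1,g2 in *. repeat split.
  - apply Rdiv_lt_0_compat; nra.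
  - apply Rdiv_lt_0_compat; nra.
  - apply Rdiv_neg_pos; nra.
  - apply Rdiv_neg_pos; nra.
Qed.

Let Wm := C^2 - S^2 - C*S*x0^2.
Let Wp := C^2 - S^2 + C*S*x0^2.
Let Pa := 1 + L1^2.
Let Pb := 1 + H2^2.
Let Dm := L1 - H2.
Let K := 1 + L1*H2.

Lemma Wm_pos : 0 < Wm /\ Wm <= Wp.
Proof. pose proof C_big. unfold Wm, Wp.
  assert (Hy : 0 <= x0^2 <= 1/4) by nra.
  assert (Hc1 : C <= 1) by nra.
  assert (0 <= C*S*x0^2 <= C*S/4) by (split; [apply Rmult_le_pos; nra| apply Rmult_le_compat_l; nra]).
  split; nra. Qed.

Lemma cf_Pa : Pa = (S^2+C^2)*(1+g1^2)/e1^2.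
Proof. destruct pos_e as (A&B&D&E). unfold Pa, L1, e1, g1 in *. field; lra. Qed.
Lemma cf_Pb : Pb = (S^2+C^2)*(1+g2^2)/f2^2.
Proof. destruct pos_e as (A&B&D&E). unfold Pb, H2, f2, g2 in *. field; lra. Qed.
Lemma cf_Dm : Dm = 2*Wm/(e1*f2).
Proof. destruct pos_e as (A&B&D&E). unfold Dm, Wm, L1, H2, e1, f2, g1, g2 in *. field; lra. Qed.
Lemma cf_sum : L1 + H2 = (S^2+C^2)*(2*x0)/(e1*f2).
Proof. destruct pos_e as (A&B&D&E). unfold L1, H2, e1, f2, g1, g2 in *. field; lra. Qed.
Lemma cf_K : K = ((C^2-S^2)*x0^2 + 4*C*S)/(e1*f2).
Proof. destruct pos_e as (A&B&D&E). unfold K, L1, H2, e1, f2, g1, g2 in *. field; lra. Qed.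
Lemma cf_HH : 1 + H1*H2 = (S^2+C^2)*x0^2/(f1*f2).
Proof. destruct pos_e as (A&B&D&E). unfold H1, H2, f1, f2, g1, g2 in *. field; lra. Qed.
Lemma cf_LL : 1 + L1*L2 = (S^2+C^2)*x0^2/(e1*e2).
Proof. destruct pos_e as (A&B&D&E). unfold L1, L2, e1, e2, g1, g2 in *. field; lra. Qed.
Lemma cf_H1 : 1 + H1^2 = (S^2+C^2)*(1+g1^2)/f1^2.
Proof. destruct pos_e as (A&B&D&E). unfold H1, f1, g1 in *. field; lra. Qed.
Lemma cf_L2 : 1 + L2^2 = (S^2+C^2)*(1+g2^2)/e2^2.
Proof. destruct pos_e as (A&B&D&E). unfold L2, e2, g2 in *. field; lra. Qed.
Lemma cf_HL : H1 - L2 = 2*Wp/(f1*e2).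
Proof. destruct pos_e as (A&B&D&E). unfold Wp, H1, L2, f1, e2, g1, g2 in *. field; lra. Qed.

Lemma basics : 0 < Dm /\ 0 < K /\ 0 <= 1 + H1*H2 /\ 0 <= 1 + L1*L2.
Proof.
  destruct pos_e as (A&B&D&E). destruct Wm_pos as [W1 W2]. pose proof C_big.
  assert (Hy : 0 <= x0^2) by nra.
  assert (Hcs : 0 < C^2 - S^2) by nra.
  assert (0 <= (C^2-S^2)*x0^2) by (apply Rmult_le_pos; lra).
  assert (0 < C*S) by nra.
  rewrite cf_Dm, cf_K, cf_HH, cf_LL. repeat split.
  - apply Rdiv_lt_0_compat; nra.
  - apply Rdiv_lt_0_compat; nra.
  - unfold Rdiv; apply Rmult_le_pos; [nra | left; apply Rinv_0_lt_compat; nra].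
  - unfold Rdiv; apply Rmult_le_pos; [nra | left; apply Rinv_0_lt_compat; nra].
Qed.

Lemma mono_up (u v e : R) : v <= u -> e < v -> 0 <= 1 + u*e -> 0 <= 1 + v*e ->
  (1+u^2)*(v-e)^2 <= (1+v^2)*(u-e)^2.
Proof.
  intros. pose proof (sec_id u v e).
  assert (0 <= (u-v)*((1+u*e)*(v-e) + (1+v*e)*(u-e))).
  { apply Rmult_le_pos; [lra|]. apply Rplus_le_le_0_compat; apply Rmult_le_pos; lra. }
  lra.
Qed.

Lemma mono_dn (u v e : R) : u <= v -> v < e -> 0 <= 1 + u*e -> 0 <= 1 + v*e ->
  (1+u^2)*(v-e)^2 <= (1+v^2)*(u-e)^2.
Proof.
  intros. pose proof (sec_id u v e).
  assert (0 <= (u-v)*((1+u*e)*(v-e) + (1+v*e)*(u-e))).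
  { replace ((u-v)*((1+u*e)*(v-e) + (1+v*e)*(u-e))) with
      ((v-u)*((1+u*e)*(e-v) + (1+v*e)*(e-u))) by ring.
    apply Rmult_le_pos; [lra|]. apply Rplus_le_le_0_compat; apply Rmult_le_pos; lra. }
  lra.
Qed.

Lemma mono_up' (u v e : R) : v <= u -> e < v -> 1 + u*e <= 0 -> 1 + v*e <= 0 ->
  (1+v^2)*(u-e)^2 <= (1+u^2)*(v-e)^2.
Proof.
  intros. pose proof (sec_id u v e).
  assert ((u-v)*((1+u*e)*(v-e) + (1+v*e)*(u-e)) <= 0).
  { assert (0 <= (u-v)*((-(1+u*e))*(v-e) + (-(1+v*e))*(u-e))).
    { apply Rmult_le_pos; [lra|]. apply Rplus_le_le_0_compat; apply Rmult_le_pos; lra. }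
    replace ((u-v)*((1+u*e)*(v-e) + (1+v*e)*(u-e))) with
      (-((u-v)*((-(1+u*e))*(v-e) + (-(1+v*e))*(u-e)))) by ring. lra. }
  lra.
Qed.

Lemma mono_dn' (u v e : R) : u <= v -> v < e -> 1 + u*e <= 0 -> 1 + v*e <= 0 ->
  (1+v^2)*(u-e)^2 <= (1+u^2)*(v-e)^2.
Proof.
  intros. pose proof (sec_id u v e).
  assert ((u-v)*((1+u*e)*(v-e) + (1+v*e)*(u-e)) <= 0).
  { assert (0 <= (v-u)*((-(1+u*e))*(e-v) + (-(1+v*e))*(e-u))).
    { apply Rmult_le_pos; [lra|]. apply Rplus_le_le_0_compat; apply Rmult_le_pos; lra. }
    replace ((u-v)*((1+u*e)*(v-e) + (1+v*e)*(u-e))) with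
      (-((v-u)*((-(1+u*e))*(e-v) + (-(1+v*e))*(e-u)))) by ring. lra. }
  lra.
Qed.

Lemma F1 : (1+s1^2)*Dm^2 <= Pa*(s1-s2)^2.
Proof.
  destruct rng as (R1&R2&R3&R4). destruct sgn as (G1&G2&G3&G4).
  destruct basics as (B1&B2&B3&B4). unfold Dm, K, Pa in *.
  assert (Hi : (1+s1^2)*(L1-H2)^2 <= (1+L1^2)*(s1-H2)^2).
  { apply mono_up; try lra. nra. }
  assert (Hii : (s1-H2)^2 <= (s1-s2)^2) by nra.
  nra.
Qed.

Lemma F2gen (s : R) : L2 <= s <= H2 -> (1+s^2)*Dm^2 <= Pb*(L1-s)^2.
Proof.
  intros [Ra Rb]. destruct sgn as (G1&G2&G3&G4).
  destruct basics as (B1&B2&B3&B4). unfold Dm, K, Pb in *.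
  replace ((L1-H2)^2) with ((H2-L1)^2) by ring. replace ((L1-s)^2) with ((s-L1)^2) by ring.
  apply mono_dn; try lra; nra.
Qed.

Lemma F2 : (1+s2^2)*Dm^2 <= Pb*(s1-s2)^2.
Proof.
  destruct rng as (R1&R2&R3&R4). destruct basics as (B1&B2&B3&B4).
  pose proof (F2gen s2 R4). unfold Dm in *.
  assert ((L1-s2)^2 <= (s1-s2)^2) by nra.
  assert (0 <= Pb) by (unfold Pb; nra). nra.
Qed.

Lemma zb_zt : (1+H1^2)*(1+L2^2)*Dm^2 <= Pa*Pb*(H1-L2)^2.
Proof.
  destruct pos_e as (A&B&D&E). destruct Wm_pos as [W1 W2].
  rewrite cf_H1, cf_L2, cf_Pa, cf_Pb, cf_Dm, cf_HL.
  set (Q := (S^2+C^2)^2*(1+g1^2)*(1+g2^2)*4/(e1^2*f2^2*f1^2*e2^2)).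
  assert (HQ : 0 <= Q).
  { unfold Q. unfold Rdiv. apply Rmult_le_pos.
    - assert (0 <= (S^2+C^2)^2) by nra. assert (0 <= 1+g1^2) by nra. assert (0 <= 1+g2^2) by nra.
      repeat apply Rmult_le_pos; lra.
    - left. apply Rinv_0_lt_compat. repeat apply Rmult_lt_0_compat; nra. }
  replace ((S ^ 2 + C ^ 2) * (1 + g1 ^ 2) / f1 ^ 2 * ((S ^ 2 + C ^ 2) * (1 + g2 ^ 2) / e2 ^ 2) *
   (2 * Wm / (e1 * f2)) ^ 2) with (Q * Wm^2) by (unfold Q; field; lra).
  replace ((S ^ 2 + C ^ 2) * (1 + g1 ^ 2) / e1 ^ 2 * ((S ^ 2 + C ^ 2) * (1 + g2 ^ 2) / f2 ^ 2) *
   (2 * Wp / (f1 * e2)) ^ 2) with (Q * Wp^2) by (unfold Q; field; lra).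
  apply Rmult_le_compat_l; [lra|]. nra.
Qed.

Lemma F3 : (1+t1^2)*(1+t2^2)*Dm^2 <= Pa*Pb*(t1-t2)^2.
Proof.
  destruct rng as (R1&R2&R3&R4). destruct sgn as (G1&G2&G3&G4).
  destruct basics as (B1&B2&B3&B4).
  assert (HPa : 0 <= Pa) by (unfold Pa; nra).
  assert (HPb : 0 <= Pb) by (unfold Pb; nra).
  assert (Hlt : H2 < L1) by (unfold Dm in B1; lra).
  destruct (Rle_lt_dec 0 (1 + t1*t2)) as [Hc|Hc].
  - assert (Hi : (1+t1^2)*(L1-t2)^2 <= Pa*(t1-t2)^2).
    { unfold Pa. apply mono_up; try lra. nra. }
    pose proof (F2gen t2 R3) as Hii.
    assert (0 <= 1 + t1^2) by nra.
    assert (H1' : (1+t1^2)*((1+t2^2)*Dm^2) <= (1+t1^2)*(Pb*(L1-t2)^2)) by (apply Rmult_le_compat_l; lra).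
    assert (H2' : Pb*((1+t1^2)*(L1-t2)^2) <= Pb*(Pa*(t1-t2)^2)) by (apply Rmult_le_compat_l; lra).
    nra.
  - assert (Hi : (1+t1^2)*(H1-t2)^2 <= (1+H1^2)*(t1-t2)^2).
    { apply mono_up'; try lra; nra. }
    assert (Hii : (1+t2^2)*(L2-H1)^2 <= (1+L2^2)*(t2-H1)^2).
    { apply mono_dn'; try lra; nra. }
    pose proof zb_zt as Hz.
    assert (HHL : 0 < H1 - L2) by lra.
    assert (0 <= 1 + t1^2) by nra. assert (0 <= 1 + t2^2) by nra.
    assert (0 <= 1 + H1^2) by nra. assert (0 <= 1 + L2^2) by nra.
    assert (Hc1 : (1+t1^2)*(1+t2^2)*(H1-L2)^2 <= (1+L2^2)*(1+H1^2)*(t1-t2)^2).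
    { replace ((L2-H1)^2) with ((H1-L2)^2) in Hii by ring.
      replace ((t2-H1)^2) with ((H1-t2)^2) in Hii by ring.
      assert (A1 : (1+t1^2)*((1+t2^2)*(H1-L2)^2) <= (1+t1^2)*((1+L2^2)*(H1-t2)^2)) by (apply Rmult_le_compat_l; lra).
      assert (A2 : (1+L2^2)*((1+t1^2)*(H1-t2)^2) <= (1+L2^2)*((1+H1^2)*(t1-t2)^2)) by (apply Rmult_le_compat_l; lra).
      nra. }
    assert (Hc2 : (1+t1^2)*(1+t2^2)*(H1-L2)^2*Dm^2 <= Pa*Pb*(H1-L2)^2*(t1-t2)^2).
    { assert (A1 : (1+t1^2)*(1+t2^2)*(H1-L2)^2*Dm^2 <= (1+L2^2)*(1+H1^2)*(t1-t2)^2*Dm^2)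
        by (apply Rmult_le_compat_r; nra).
      assert (A2 : (1+H1^2)*(1+L2^2)*Dm^2*(t1-t2)^2 <= Pa*Pb*(H1-L2)^2*(t1-t2)^2)
        by (apply Rmult_le_compat_r; nra).
      nra. }
    assert (Hp : 0 < (H1-L2)^2) by nra.
    apply (Rmult_le_reg_r ((H1-L2)^2)); [lra|]. nra.
Qed.

Lemma numeric : C^4 * (Pa*Pb*(Pa+Pb+2*K)) <= (172/100)^2*(1+S)^2*Dm^4.
Proof.
  destruct pos_e as (A&B&D&E). destruct Wm_pos as [W1 W2]. pose proof C_big.
  assert (Hsum : Pa+Pb+2*K = 4 + (L1+H2)^2) by (unfold Pa, Pb, K; ring).
  rewrite Hsum, cf_Pa, cf_Pb, cf_sum, cf_Dm, HSC.
  set (E0 := e1*f2). assert (HE : 0 < E0) by (unfold E0; nra).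
  assert (Hg : (1+g1^2)*(1+g2^2) = 4 + (x0^2)^2) by (unfold g1, g2; ring).
  replace (C ^ 4 * (1 * (1 + g1 ^ 2) / e1 ^ 2 * (1 * (1 + g2 ^ 2) / f2 ^ 2) * (4 + (1 * (2 * x0) / E0) ^ 2)))
    with (C^4 * (4 + (x0^2)^2) * (4*E0^2 + 4*x0^2) / E0^4) by (rewrite <- Hg; unfold E0; field; lra).
  replace ((172 / 100) ^ 2 * (1 + S) ^ 2 * (2 * Wm / E0) ^ 4) with
     ((172 / 100) ^ 2 * (1 + S) ^ 2 * (16 * Wm^4) / E0^4) by (field; lra).
  unfold Rdiv. apply Rmult_le_compat_r; [left; apply Rinv_0_lt_compat; apply pow_lt; lra|].
  set (y := x0^2).
  assert (Hy : 0 <= y <= 1/4) by (unfold y; nra).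
  assert (HE1 : E0 <= (1+S)^2).
  { unfold E0, e1, f2, g1, g2. assert (C <= 1) by nra. nra. }
  assert (HE2 : E0^2 <= (1+S)^4) by (replace ((1+S)^4) with (((1+S)^2)^2) by ring; apply pow_incr; lra).
  assert (HW : 1 - 2*S^2 - S*y <= Wm).
  { unfold Wm. fold y. assert (C <= 1) by nra. assert (C*S*y <= S*y) by (apply Rmult_le_compat_r; [nra|]; nra). nra. }
  assert (HW0 : 0 < 1 - 2*S^2 - S*y) by nra.
  assert (HW4 : (1 - 2*S^2 - S*y)^4 <= Wm^4) by (apply pow_incr; lra).
  assert (HC4 : C^4 <= 1) by (assert (C <= 1) by nra; replace 1 with (1^4) by ring; apply pow_incr; lra).
  pose proof (final_num S y HS HS2 (proj1 Hy) (proj2 Hy)) as Hf.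
  assert (H4 : 0 <= 4 + y^2) by nra.
  assert (Ha : C^4 * (4 + y^2) * (4*E0^2 + 4*y) <= 4 * ((4 + y^2) * ((1+S)^4 + y))).
  { assert (0 <= C^4) by nra.
    assert (C^4 * ((4 + y^2) * (4*E0^2 + 4*y)) <= 1 * ((4 + y^2) * (4*E0^2 + 4*y))) by (apply Rmult_le_compat_r; nra).
    nra. }
  assert (Hb : 4 * (172 / 100) ^ 2 * (1 + S) ^ 2 * (1 - 2*S^2 - S*y)^4 <= 4 * (172 / 100) ^ 2 * (1 + S) ^ 2 * Wm^4).
  { apply Rmult_le_compat_l; [nra|lra]. }
  nra.
Qed.

Lemma core_bound : C^4 * ((t1*(t2-s2) - t2*(t1-s1))^2 + ((t1-s1)-(t2-s2))^2)
   <= (172/100)^2*(1+S)^2*S^2*(t1-t2)^2*(s1-s2)^2.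
Proof.
  pose proof F1 as HF1. pose proof F2 as HF2. pose proof F3 as HF3.
  pose proof numeric as HN.
  destruct basics as (B1&B2&B3&B4).
  set (d1 := t1 - s1) in *. set (d2 := t2 - s2) in *.
  set (P1 := 1 + t1^2) in *. set (P2 := 1 + t2^2) in *.
  set (Q1 := 1 + s1^2) in *. set (Q2 := 1 + s2^2) in *.
  set (Dp := t1 - t2) in *. set (Dq := s1 - s2) in *.
  set (c := 1 + t1*t2).
  assert (HNid : (t1*d2 - t2*d1)^2 + (d1-d2)^2 = P2*d1^2 + P1*d2^2 - 2*c*d1*d2)
    by (unfold P1, P2, c, d1, d2; ring).
  assert (Hcid : c^2 = P1*P2 - Dp^2) by (unfold c, P1, P2, Dp; ring).
  assert (HKid : K^2 = Pa*Pb - Dm^2) by (unfold K, Pa, Pb, Dm; ring).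
  assert (HP1 : 0 < P1) by (unfold P1; nra). assert (HP2 : 0 < P2) by (unfold P2; nra).
  assert (HQ1 : 0 < Q1) by (unfold Q1; nra). assert (HQ2 : 0 < Q2) by (unfold Q2; nra).
  assert (HPa : 0 < Pa) by (unfold Pa; nra). assert (HPb : 0 < Pb) by (unfold Pb; nra).
  assert (HS2p : 0 <= S^2) by nra.
  assert (HDm2 : 0 <= Dm^2) by nra.
  assert (T1 : P2*d1^2*Dm^4 <= S^2*(Pa*Pb*Dp^2)*(Pa*Dq^2)).
  { assert (A1 : P2*d1^2 <= S^2*(P1*P2*Q1)).
    { assert (P2*d1^2 <= P2*(S^2*P1*Q1)) by (apply Rmult_le_compat_l; lra). nra. }
    assert (A2 : (P1*P2*Dm^2)*(Q1*Dm^2) <= (Pa*Pb*Dp^2)*(Pa*Dq^2)).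
    { apply Rmult_le_compat; try lra; apply Rmult_le_pos; try lra; nra. }
    assert (A3 : P2*d1^2*Dm^4 <= S^2*(P1*P2*Q1)*Dm^4) by (apply Rmult_le_compat_r; nra).
    assert (A4 : S^2*((P1*P2*Dm^2)*(Q1*Dm^2)) <= S^2*((Pa*Pb*Dp^2)*(Pa*Dq^2))) by (apply Rmult_le_compat_l; lra).
    nra. }
  assert (T2 : P1*d2^2*Dm^4 <= S^2*(Pa*Pb*Dp^2)*(Pb*Dq^2)).
  { assert (A1 : P1*d2^2 <= S^2*(P1*P2*Q2)).
    { assert (P1*d2^2 <= P1*(S^2*P2*Q2)) by (apply Rmult_le_compat_l; lra). nra. }
    assert (A2 : (P1*P2*Dm^2)*(Q2*Dm^2) <= (Pa*Pb*Dp^2)*(Pb*Dq^2)).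
    { apply Rmult_le_compat; try lra; apply Rmult_le_pos; try lra; nra. }
    assert (A3 : P1*d2^2*Dm^4 <= S^2*(P1*P2*Q2)*Dm^4) by (apply Rmult_le_compat_r; nra).
    assert (A4 : S^2*((P1*P2*Dm^2)*(Q2*Dm^2)) <= S^2*((Pa*Pb*Dp^2)*(Pb*Dq^2))) by (apply Rmult_le_compat_l; lra).
    nra. }
  assert (T3 : -(2*c*d1*d2)*Dm^4 <= 2*(S^2*K*Pa*Pb*Dp^2*Dq^2)).
  { assert (Hc2 : c^2*Dm^2 <= K^2*Dp^2) by nra.
    assert (Hdd : d1^2*d2^2 <= S^4*(P1*Q1)*(P2*Q2)).
    { replace (S^4*(P1*Q1)*(P2*Q2)) with ((S^2*P1*Q1)*(S^2*P2*Q2)) by ring.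
      apply Rmult_le_compat; try nra. }
    assert (HPQ : (P1*P2*Dm^2)*((Q1*Dm^2)*(Q2*Dm^2)) <= (Pa*Pb*Dp^2)*((Pa*Dq^2)*(Pb*Dq^2))).
    { apply Rmult_le_compat; try (apply Rmult_le_pos; nra); try lra.
      apply Rmult_le_compat; try nra. }
    assert (Hsq : (c*d1*d2*Dm^4)^2 <= (S^2*K*Pa*Pb*Dp^2*Dq^2)^2).
    { replace ((c*d1*d2*Dm^4)^2) with ((c^2*Dm^2)*(d1^2*d2^2)*Dm^6) by ring.
      assert (E1 : (c^2*Dm^2)*(d1^2*d2^2)*Dm^6 <= (K^2*Dp^2)*(S^4*(P1*Q1)*(P2*Q2))*Dm^6).
      { apply Rmult_le_compat_r; [nra|]. apply Rmult_le_compat; nra. }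
      replace ((K^2*Dp^2)*(S^4*(P1*Q1)*(P2*Q2))*Dm^6) with
        ((K^2*Dp^2*S^4)*((P1*P2*Dm^2)*((Q1*Dm^2)*(Q2*Dm^2)))) in E1 by ring.
      assert (E2 : (K^2*Dp^2*S^4)*((P1*P2*Dm^2)*((Q1*Dm^2)*(Q2*Dm^2))) <=
                   (K^2*Dp^2*S^4)*((Pa*Pb*Dp^2)*((Pa*Dq^2)*(Pb*Dq^2)))).
      { apply Rmult_le_compat_l; [|lra]. nra. }
      nra. }
    assert (Hr : 0 <= S^2*K*Pa*Pb*Dp^2*Dq^2).
    { assert (0 <= Dp^2) by (apply pow2_ge_0). assert (0 <= Dq^2) by (apply pow2_ge_0). assert (0 <= S^2*K) by (apply Rmult_le_pos; lra). assert (0 <= S^2*K*Pa*Pb) by (apply Rmult_le_pos; [apply Rmult_le_pos|]; lra). assert (0 <= S^2*K*Pa*Pb*Dp^2) by (apply Rmult_le_pos; lra). apply Rmult_le_pos; lra. }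
    assert (Habs : Rabs (c*d1*d2*Dm^4) <= S^2*K*Pa*Pb*Dp^2*Dq^2).
    { destruct (Rle_lt_dec (Rabs (c*d1*d2*Dm^4)) (S^2*K*Pa*Pb*Dp^2*Dq^2)) as [Hl|Hl]; [exact Hl|].
      exfalso. rewrite <- (pow2_abs (c*d1*d2*Dm^4)) in Hsq. nra. }
    pose proof (Rle_abs (-(c*d1*d2*Dm^4))). rewrite Rabs_Ropp in H. nra. }
  assert (Hsum : ((t1*d2 - t2*d1)^2 + (d1-d2)^2)*Dm^4 <= S^2*Dp^2*Dq^2*(Pa*Pb*(Pa+Pb+2*K))).
  { rewrite HNid. nra. }
  assert (Hfin : C^4*(((t1*d2 - t2*d1)^2 + (d1-d2)^2)*Dm^4) <= (172/100)^2*(1+S)^2*S^2*Dp^2*Dq^2*Dm^4).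
  { assert (0 <= C^4) by nra.
    assert (E1 : C^4*(((t1*d2 - t2*d1)^2 + (d1-d2)^2)*Dm^4) <= C^4*(S^2*Dp^2*Dq^2*(Pa*Pb*(Pa+Pb+2*K))))
      by (apply Rmult_le_compat_l; lra).
    assert (E2 : (S^2*Dp^2*Dq^2)*(C^4*(Pa*Pb*(Pa+Pb+2*K))) <= (S^2*Dp^2*Dq^2)*((172/100)^2*(1+S)^2*Dm^4))
      by (apply Rmult_le_compat_l; [nra|lra]).
    nra. }
  assert (HD4 : 0 < Dm^4) by (apply pow_lt; lra).
  apply (Rmult_le_reg_r (Dm^4)); [lra|]. nra.
Qed.
End Core.

Lemma sq_of_sqrt (x : R) : 0 <= x -> sqrt x = 1 -> x = 1.
Proof. intros Hx H. rewrite <- (sqrt_sqrt x Hx), H. ring. Qed.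

Lemma wedge_cone (alpha : R) (s u p : pt) :
  0 <= alpha <= PI -> norm u = 1 -> wedge alpha s u p ->
  (fst p - fst s)*fst u + (snd p - snd s)*snd u >=
  cos alpha * sqrt ((fst p - fst s)*(fst p - fst s) + (snd p - snd s)*(snd p - snd s)).
Proof.
  intros Ha Hu (r & v & Hr & Hv & Hang & Hp).
  destruct u as [ux uz]. destruct v as [vx vz]. destruct s as [sx sz].
  subst p. simpl in *. unfold norm, dot in Hu, Hv. simpl in Hu, Hv.
  apply sq_of_sqrt in Hu; [|nra]. apply sq_of_sqrt in Hv; [|nra].
  unfold angle, dot in Hang. simpl in Hang.
  set (d := vx*ux + vz*uz) in *.
  assert (Hd : d*d <= 1).
  { unfold d. assert (0 <= (vx*uz - vz*ux)^2) by apply pow2_ge_0.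
    assert (E : (vx*ux + vz*uz)*(vx*ux + vz*uz) + (vx*uz - vz*ux)^2 = (vx*vx+vz*vz)*(ux*ux+uz*uz)) by ring.
    rewrite Hu, Hv in E. lra. }
  assert (Hd1 : -1 <= d <= 1) by (split; nra).
  assert (Hc : cos alpha <= d).
  { rewrite <- (cos_acos d Hd1). apply cos_decr_1; try lra; pose proof (acos_bound d); lra. }
  replace (sx + r*vx - sx) with (r*vx) by ring. replace (sz + r*vz - sz) with (r*vz) by ring.
  replace (r*vx*(r*vx) + r*vz*(r*vz)) with (r*r) by (transitivity (r*r*(vx*vx+vz*vz)); [rewrite Hv; ring| ring]).
  rewrite sqrt_square by lra.
  replace (r*vx*ux + r*vz*uz) with (r*d) by (unfold d; ring). nra.
Qed.

Lemma cone_wedge (alpha : R) (s u p : pt) :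
  0 <= alpha <= PI -> fst u * fst u + snd u * snd u = 1 ->
  0 < (fst p - fst s)*(fst p - fst s) + (snd p - snd s)*(snd p - snd s) ->
  (fst p - fst s)*fst u + (snd p - snd s)*snd u >=
  cos alpha * sqrt ((fst p - fst s)*(fst p - fst s) + (snd p - snd s)*(snd p - snd s)) ->
  wedge alpha s u p.
Proof.
  destruct u as [ux uz]. destruct s as [sx sz]. destruct p as [px pz]. simpl.
  intros Ha Hu Hpos H.
  set (wx := px - sx) in *. set (wz := pz - sz) in *.
  set (r := sqrt (wx*wx + wz*wz)) in *.
  assert (Hr : 0 < r) by (apply sqrt_lt_R0; lra).
  assert (Hr2 : r*r = wx*wx+wz*wz) by (apply sqrt_sqrt; lra).
  exists r, (wx/r, wz/r). split; [lra|]. split; [|split].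
  - unfold norm, dot. simpl. replace (wx/r*(wx/r) + wz/r*(wz/r)) with 1. apply sqrt_1.
    replace (wx/r*(wx/r) + wz/r*(wz/r)) with ((wx*wx+wz*wz)/(r*r)) by (field; lra).
    rewrite <- Hr2. field. lra.
  - unfold angle, dot. simpl. set (d := wx/r*ux + wz/r*uz).
    assert (Hd : d = (wx*ux+wz*uz)/r) by (unfold d; field; lra).
    assert (Hd2 : d*d <= 1).
    { rewrite Hd. assert (0 <= (wx*uz - wz*ux)^2) by apply pow2_ge_0.
      assert (E : (wx*ux + wz*uz)^2 + (wx*uz - wz*ux)^2 = (wx*wx+wz*wz)*(ux*ux+uz*uz)) by ring.
      rewrite Hu, <- Hr2 in E.
      replace ((wx * ux + wz * uz) / r * ((wx * ux + wz * uz) / r)) with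
        ((wx * ux + wz * uz)^2 / (r*r)) by (field; lra).
      apply (Rmult_le_reg_r (r*r)); [nra|]. unfold Rdiv. rewrite Rmult_assoc, Rinv_l by nra. lra. }
    assert (Hd3 : cos alpha <= d).
    { rewrite Hd. apply (Rmult_le_reg_r r); [lra|]. field_simplify; [|lra]. lra. }
    pose proof (COS_bound alpha).
    assert (Hd1 : -1 <= d <= 1) by (split; nra).
    apply cos_decr_0; try lra; try (pose proof (acos_bound d); lra).
    rewrite cos_acos by lra. lra.
  - simpl. unfold wx, wz. f_equal; field; lra.
Qed.

Lemma sqrt_sq_id (x : R) : 0 <= x -> sqrt x * sqrt x = x.
Proof. apply sqrt_sqrt. Qed.

Lemma le_of_sq (a b : R) : 0 <= b -> a*a <= b*b -> a <= b.
Proof. intros Hb H. destruct (Rle_lt_dec a b); [auto|]. nra. Qed.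

Lemma pair_cone (ux uz ax az bx bz ca : R) :
  ux*ux+uz*uz = 1 -> 0 <= ca -> ca <= 1 ->
  ax*ux+az*uz >= ca*sqrt(ax*ax+az*az) -> bx*ux+bz*uz >= ca*sqrt(bx*bx+bz*bz) ->
  ax*bx+az*bz >= (2*ca*ca-1)*sqrt(ax*ax+az*az)*sqrt(bx*bx+bz*bz).
Proof.
  intros Hu Hc0 Hc1 Ha Hb.
  set (na := sqrt (ax*ax+az*az)) in *. set (nb := sqrt (bx*bx+bz*bz)) in *.
  assert (Hna : na*na = ax*ax+az*az) by (apply sqrt_sqrt; nra).
  assert (Hnb : nb*nb = bx*bx+bz*bz) by (apply sqrt_sqrt; nra).
  assert (Hna0 : 0 <= na) by apply sqrt_pos. assert (Hnb0 : 0 <= nb) by apply sqrt_pos.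
  set (A1 := ax*ux+az*uz) in *. set (A2 := az*ux - ax*uz).
  set (B1 := bx*ux+bz*uz) in *. set (B2 := bz*ux - bx*uz).
  assert (EA : A1*A1 + A2*A2 = na*na).
  { rewrite Hna. unfold A1, A2. transitivity ((ax*ax+az*az)*(ux*ux+uz*uz)); [ring|rewrite Hu; ring]. }
  assert (EB : B1*B1 + B2*B2 = nb*nb).
  { rewrite Hnb. unfold B1, B2. transitivity ((bx*bx+bz*bz)*(ux*ux+uz*uz)); [ring|rewrite Hu; ring]. }
  assert (Eab : ax*bx+az*bz = A1*B1 + A2*B2).
  { unfold A1, A2, B1, B2. transitivity ((ax*bx+az*bz)*(ux*ux+uz*uz)); [rewrite Hu; ring|ring]. }
  assert (HA1 : ca*na <= A1) by lra. assert (HB1 : ca*nb <= B1) by lra.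
  assert (HA0 : 0 <= ca*na) by nra. assert (HB0 : 0 <= ca*nb) by nra.
  assert (P1 : ca*na*(ca*nb) <= A1*B1) by (apply Rmult_le_compat; lra).
  assert (HA2 : A2*A2 <= (1-ca*ca)*(na*na)) by nra.
  assert (HB2 : B2*B2 <= (1-ca*ca)*(nb*nb)) by nra.
  assert (Hk : 0 <= 1 - ca*ca) by nra.
  assert (P2 : (A2*B2)*(A2*B2) <= ((1-ca*ca)*na*nb)*((1-ca*ca)*na*nb)).
  { replace ((A2*B2)*(A2*B2)) with ((A2*A2)*(B2*B2)) by ring.
    replace (((1-ca*ca)*na*nb)*((1-ca*ca)*na*nb)) with (((1-ca*ca)*(na*na))*((1-ca*ca)*(nb*nb))) by ring.
    apply Rmult_le_compat; nra. }
  assert (P3 : -(A2*B2) <= (1-ca*ca)*na*nb).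
  { apply le_of_sq; [repeat apply Rmult_le_pos; lra|]. nra. }
  rewrite Eab. nra.
Qed.

Lemma below (C S g h wx wz : R) : 0 < h -> 0 < C -> S^2 + C^2 = 1 -> S*S*(g*g) < C*C ->
  wx*(g*h) + wz*(-h) >= C*sqrt(wx*wx+wz*wz)*sqrt((g*h)*(g*h)+(-h)*(-h)) -> 0 <= wz ->
  wx = 0 /\ wz = 0.
Proof.
  intros Hh HC HSC Hg H Hwz.
  set (nw := sqrt (wx*wx+wz*wz)) in *. set (nd := sqrt ((g*h)*(g*h)+(-h)*(-h))) in *.
  assert (Hnw : nw*nw = wx*wx+wz*wz) by (apply sqrt_sqrt; nra).
  assert (Hnd : nd*nd = h*h*(1+g*g)) by (unfold nd; rewrite sqrt_sqrt; nra).
  assert (Hnw0 : 0 <= nw) by apply sqrt_pos. assert (Hnd0 : 0 <= nd) by apply sqrt_pos.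
  assert (H0 : 0 <= C*nw*nd) by (repeat apply Rmult_le_pos; lra).
  assert (HX : 0 <= g*wx - wz) by nra.
  assert (Hsq : (C*nw*nd)*(C*nw*nd) <= (h*(g*wx - wz))*(h*(g*wx - wz))).
  { apply Rmult_le_compat; nra. }
  assert (Hsq2 : C*C*(wx*wx+wz*wz)*(1+g*g) <= (g*wx - wz)*(g*wx-wz)).
  { replace ((C*nw*nd)*(C*nw*nd)) with (C*C*(nw*nw)*(nd*nd)) in Hsq by ring.
    rewrite Hnw, Hnd in Hsq. apply (Rmult_le_reg_l (h*h)); [nra|]. nra. }
  assert (Hgw : g*wx - wz <= g*wx) by lra.
  assert (Hsq3 : (g*wx - wz)*(g*wx - wz) <= (g*wx)*(g*wx)) by (apply Rmult_le_compat; lra).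
  assert (Hwx : wx*wx*(C*C - S*S*(g*g)) <= 0).
  { assert (C*C*(wx*wx)*(1+g*g) <= C*C*(wx*wx+wz*wz)*(1+g*g)).
    { apply Rmult_le_compat_r; [nra|]. apply Rmult_le_compat_l; nra. }
    replace (C*C) with (1 - S*S) at 1 by nra. nra. }
  assert (Hpos : 0 < C*C - S*S*(g*g)) by lra.
  assert (Hww : wx*wx <= 0) by (apply (Rmult_le_reg_r (C*C - S*S*(g*g))); nra).
  assert (Hwx0 : wx = 0) by (destruct (Req_dec wx 0); [auto|exfalso; nra]).
  subst wx. split; [reflexivity|]. destruct (Req_dec wz 0); [auto|exfalso; nra].
Qed.

Lemma tau_pair (C S t s r1 r2 : R) : 0 < C -> 0 < S -> S^2 + C^2 = 1 -> 0 < r1 -> 0 < r2 ->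
  (t*r1)*(s*r2) + (-r1)*(-r2) >= C*sqrt((t*r1)*(t*r1)+(-r1)*(-r1))*sqrt((s*r2)*(s*r2)+(-r2)*(-r2)) ->
  (t-s)^2 <= S^2*(1+t^2)*(1+s^2) /\ C*Rabs(t-s) <= S*(1+t*s).
Proof.
  intros HC HS HSC H1 H2 H.
  set (n1 := sqrt ((t*r1)*(t*r1)+(-r1)*(-r1))) in *.
  set (n2 := sqrt ((s*r2)*(s*r2)+(-r2)*(-r2))) in *.
  assert (Hn1 : n1*n1 = r1*r1*(1+t*t)) by (unfold n1; rewrite sqrt_sqrt; nra).
  assert (Hn2 : n2*n2 = r2*r2*(1+s*s)) by (unfold n2; rewrite sqrt_sqrt; nra).
  assert (Hn10 : 0 <= n1) by apply sqrt_pos. assert (Hn20 : 0 <= n2) by apply sqrt_pos.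
  assert (H0 : 0 <= C*n1*n2) by (repeat apply Rmult_le_pos; lra).
  assert (Hd : (t*r1)*(s*r2) + (-r1)*(-r2) = r1*r2*(1+t*s)) by ring.
  rewrite Hd in H.
  assert (Hr : 0 < r1*r2) by nra.
  assert (Hts : 0 <= 1 + t*s) by nra.
  assert (Hsq : (C*n1*n2)*(C*n1*n2) <= (r1*r2*(1+t*s))*(r1*r2*(1+t*s))) by (apply Rmult_le_compat; lra).
  replace ((C*n1*n2)*(C*n1*n2)) with (C*C*(n1*n1)*(n2*n2)) in Hsq by ring.
  rewrite Hn1, Hn2 in Hsq.
  assert (Hk : C*C*((1+t*t)*(1+s*s)) <= (1+t*s)*(1+t*s)).
  { apply (Rmult_le_reg_l ((r1*r2)*(r1*r2))); [nra|]. nra. }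
  assert (Eid : (1+t*t)*(1+s*s) = (1+t*s)*(1+t*s) + (t-s)*(t-s)) by ring.
  split.
  - nra.
  - assert (Hq : (C*(t-s))*(C*(t-s)) <= (S*(1+t*s))*(S*(1+t*s))) by nra.
    assert (0 <= S*(1+t*s)) by nra.
    destruct (Rle_lt_dec 0 (t-s)).
    + rewrite Rabs_pos_eq by lra. apply le_of_sq; lra.
    + rewrite Rabs_left by lra. apply le_of_sq; nra.
Qed.

Lemma bis (vx vz wx wz ca : R) : vx*vx+vz*vz = 1 -> wx*wx+wz*wz = 1 -> 0 < ca ->
  vx*wx+vz*wz >= 2*ca*ca-1 ->
  0 < sqrt((vx+wx)*(vx+wx)+(vz+wz)*(vz+wz)) /\
  ((vx+wx)/sqrt((vx+wx)*(vx+wx)+(vz+wz)*(vz+wz)))*((vx+wx)/sqrt((vx+wx)*(vx+wx)+(vz+wz)*(vz+wz)))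
   + ((vz+wz)/sqrt((vx+wx)*(vx+wx)+(vz+wz)*(vz+wz)))*((vz+wz)/sqrt((vx+wx)*(vx+wx)+(vz+wz)*(vz+wz))) = 1 /\
  vx*((vx+wx)/sqrt((vx+wx)*(vx+wx)+(vz+wz)*(vz+wz))) + vz*((vz+wz)/sqrt((vx+wx)*(vx+wx)+(vz+wz)*(vz+wz))) >= ca /\
  wx*((vx+wx)/sqrt((vx+wx)*(vx+wx)+(vz+wz)*(vz+wz))) + wz*((vz+wz)/sqrt((vx+wx)*(vx+wx)+(vz+wz)*(vz+wz))) >= ca.
Proof.
  intros Hv Hw Hc Hd.
  set (d := vx*wx+vz*wz) in *.
  assert (Hm : (vx+wx)*(vx+wx)+(vz+wz)*(vz+wz) = 2 + 2*d) by (unfold d; nra).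
  set (nm := sqrt((vx+wx)*(vx+wx)+(vz+wz)*(vz+wz))).
  assert (Hd1 : 0 < 1 + d) by nra.
  assert (Hnm2 : nm*nm = 2+2*d) by (unfold nm; rewrite sqrt_sqrt; lra).
  assert (Hnm : 0 < nm) by (unfold nm; apply sqrt_lt_R0; lra).
  assert (Hkey : ca*nm <= 1 + d).
  { apply le_of_sq; [lra|]. replace (ca*nm*(ca*nm)) with (ca*ca*(nm*nm)) by ring. rewrite Hnm2. nra. }
  repeat split.
  - exact Hnm.
  - replace ((vx + wx) / nm * ((vx + wx) / nm) + (vz + wz) / nm * ((vz + wz) / nm)) with
      (((vx+wx)*(vx+wx)+(vz+wz)*(vz+wz))/(nm*nm)) by (field; lra).
    rewrite Hm, Hnm2. field. lra.
  - replace (vx * ((vx + wx) / nm) + vz * ((vz + wz) / nm)) with ((1+d)/nm)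
      by (transitivity ((vx*vx+vz*vz + d)/nm); [rewrite Hv; reflexivity | unfold d; field; lra]).
    apply Rle_ge. apply (Rmult_le_reg_r nm); [lra|]. field_simplify; lra.
  - replace (wx * ((vx + wx) / nm) + wz * ((vz + wz) / nm)) with ((1+d)/nm)
      by (transitivity ((wx*wx+wz*wz + d)/nm); [rewrite Hw; reflexivity | unfold d; field; lra]).
    apply Rle_ge. apply (Rmult_le_reg_r nm); [lra|]. field_simplify; lra.
Qed.

Lemma trig (alpha : R) : 0 < alpha -> alpha <= 1/10 ->
  0 < sin(2*alpha) /\ sin(2*alpha) <= 1/5 /\ 0 < cos(2*alpha) /\
  (sin(2*alpha))^2 + (cos(2*alpha))^2 = 1 /\ cos(2*alpha) = 2*cos alpha*cos alpha - 1 /\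
  0 < cos alpha /\ cos alpha <= 1 /\ 0 <= alpha <= PI.
Proof.
  intros H1 H2. pose proof PI2_3_2.
  repeat split.
  - apply sin_gt_0; lra.
  - pose proof (sin_lt_x (2*alpha)). lra.
  - apply cos_gt_0; lra.
  - pose proof (sin2_cos2 (2*alpha)). unfold Rsqr in H0. nra.
  - apply cos_2a_cos.
  - apply cos_gt_0; lra.
  - pose proof (COS_bound alpha); lra.
  - lra.
  - lra.
Qed.

Lemma ss0 (a b : R) : 0 <= a*a + b*b.
Proof. nra. Qed.

Lemma pos_ss (a b : R) : b <> 0 -> 0 < a*a + b*b.
Proof. intro. assert (0 < b*b) by (destruct (Rlt_or_le b 0); nra). nra. Qed.

Lemma lb_angle (S C h t cL : R) : 0 < h -> 0 < C -> 0 < S -> S^2 + C^2 = 1 ->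
  cL = 2*S*(1+S)/C^2 ->
  t*t + (-h)*(-(cL*h) - h) >= C*sqrt(t*t+(-h)*(-h))*sqrt(t*t+(-(cL*h)-h)*(-(cL*h)-h)).
Proof.
  intros Hh HC HS HSC HcL.
  set (na := sqrt(t*t+(-h)*(-h))). set (nb := sqrt(t*t+(-(cL*h)-h)*(-(cL*h)-h))).
  assert (Hna : na*na = t*t+(-h)*(-h)) by (apply sqrt_sqrt; apply ss0).
  assert (Hnb : nb*nb = t*t+(-(cL*h)-h)*(-(cL*h)-h)) by (apply sqrt_sqrt; apply ss0).
  assert (Hna0 : 0 <= na) by apply sqrt_pos. assert (Hnb0 : 0 <= nb) by apply sqrt_pos.
  assert (HcL0 : 0 <= cL) by (rewrite HcL; unfold Rdiv; apply Rmult_le_pos; [nra| left; apply Rinv_0_lt_compat; nra]).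
  set (dt := t*t + (-h)*(-(cL*h) - h)).
  set (cr := t*(-(cL*h)-h) - (-h)*t).
  assert (Eid : (na*nb)*(na*nb) = dt*dt + cr*cr).
  { replace ((na*nb)*(na*nb)) with ((na*na)*(nb*nb)) by ring. rewrite Hna, Hnb. unfold dt, cr. ring. }
  set (m := h*(1+S)/C).
  assert (E1 : h*h*(1+cL) = m*m).
  { assert (h*h*(1+cL) - m*m = h*h*(S^2+C^2-1)/C^2) by (rewrite HcL; unfold m; field; lra).
    rewrite HSC in H. assert (h * h * (S ^ 2 + C ^ 2 - 1) / C ^ 2 = 0) by (rewrite HSC; field; lra). lra. }
  assert (E2 : C*(cL*h) = 2*S*m) by (rewrite HcL; unfold m; field; lra).
  assert (Hdt : dt = t*t + m*m) by (unfold dt; nra).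
  assert (Hcr : cr = -(t*(cL*h))) by (unfold cr; ring).
  assert (Hm0 : 0 <= m) by (unfold m; unfold Rdiv; apply Rmult_le_pos; [nra|left; apply Rinv_0_lt_compat; lra]).
  assert (Habs : forall x, x*x = Rabs x * Rabs x).
  { intro x. rewrite <- Rabs_mult. rewrite Rabs_pos_eq; [ring|]. nra. }
  assert (Hkey : C*Rabs cr <= S*dt).
  { rewrite Hcr, Rabs_Ropp, Rabs_mult, (Rabs_pos_eq (cL*h)) by nra.
    replace (C*(Rabs t*(cL*h))) with (Rabs t*(C*(cL*h))) by ring. rewrite E2, Hdt.
    rewrite (Habs t). pose proof (Rabs_pos t).
    assert (0 <= S*((Rabs t - m)*(Rabs t - m))) by (apply Rmult_le_pos; [lra| exact (Rle_0_sqr _)]).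
    assert (S * (Rabs t * Rabs t + m * m) - Rabs t * (2 * S * m) = S*((Rabs t - m)*(Rabs t - m))) by ring.
    lra. }
  assert (Hdt0 : 0 <= dt) by (rewrite Hdt; apply ss0).
  apply Rle_ge. apply le_of_sq; [lra|].
  replace (C*na*nb*(C*na*nb)) with (C*C*((na*nb)*(na*nb))) by ring. rewrite Eid.
  assert (Hc2 : (C*cr)*(C*cr) <= (S*dt)*(S*dt)).
  { replace ((C*cr)*(C*cr)) with ((C*Rabs cr)*(C*Rabs cr)) by (transitivity (C*C*(Rabs cr*Rabs cr)); [ring| rewrite <- Habs; ring]).
    pose proof (Rabs_pos cr). clear Habs.
    apply Rmult_le_compat; nra. }
  clear Habs. assert (S*S = 1 - C*C) by nra. nra.
Qed.

Lemma unit_div (ax az : R) : 0 < ax*ax+az*az ->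
  (ax/sqrt(ax*ax+az*az))*(ax/sqrt(ax*ax+az*az)) + (az/sqrt(ax*ax+az*az))*(az/sqrt(ax*ax+az*az)) = 1.
Proof.
  intro H. assert (Hs : sqrt(ax*ax+az*az)*sqrt(ax*ax+az*az) = ax*ax+az*az) by (apply sqrt_sqrt; lra).
  assert (0 < sqrt(ax*ax+az*az)) by (apply sqrt_lt_R0; lra).
  replace ((ax/sqrt(ax*ax+az*az))*(ax/sqrt(ax*ax+az*az)) + (az/sqrt(ax*ax+az*az))*(az/sqrt(ax*ax+az*az)))
    with ((ax*ax+az*az)/(sqrt(ax*ax+az*az)*sqrt(ax*ax+az*az))) by (field; lra).
  rewrite Hs. field. lra.
Qed.

Definition bisu (a b : pt) : pt :=
  let na := sqrt (fst a * fst a + snd a * snd a) in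
  let nb := sqrt (fst b * fst b + snd b * snd b) in
  let vx := fst a / na in let vz := snd a / na in
  let wx := fst b / nb in let wz := snd b / nb in
  let nm := sqrt ((vx+wx)*(vx+wx)+(vz+wz)*(vz+wz)) in
  ((vx+wx)/nm, (vz+wz)/nm).

Lemma bisu_ok (a b : pt) (ca : R) : 0 < ca ->
  0 < fst a * fst a + snd a * snd a -> 0 < fst b * fst b + snd b * snd b ->
  fst a * fst b + snd a * snd b >= (2*ca*ca-1) * sqrt (fst a * fst a + snd a * snd a) * sqrt (fst b * fst b + snd b * snd b) ->
  fst (bisu a b) * fst (bisu a b) + snd (bisu a b) * snd (bisu a b) = 1 /\
  fst a * fst (bisu a b) + snd a * snd (bisu a b) >= ca * sqrt (fst a * fst a + snd a * snd a) /\
  fst b * fst (bisu a b) + snd b * snd (bisu a b) >= ca * sqrt (fst b * fst b + snd b * snd b).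
Proof.
  destruct a as [ax az]. destruct b as [bx bz]. simpl. intros Hc Ha Hb Hab.
  unfold bisu. simpl.
  set (na := sqrt (ax*ax+az*az)) in *. set (nb := sqrt (bx*bx+bz*bz)) in *.
  assert (Hna : 0 < na) by (apply sqrt_lt_R0; lra). assert (Hnb : 0 < nb) by (apply sqrt_lt_R0; lra).
  pose proof (unit_div ax az Ha) as Hv. pose proof (unit_div bx bz Hb) as Hw. fold na nb in Hv, Hw.
  assert (Hvw : ax/na*(bx/nb) + az/na*(bz/nb) >= 2*ca*ca-1).
  { replace (ax/na*(bx/nb) + az/na*(bz/nb)) with ((ax*bx+az*bz)/(na*nb)) by (field; lra).
    apply Rle_ge. apply (Rmult_le_reg_r (na*nb)); [nra|].
    replace ((ax*bx+az*bz)/(na*nb)*(na*nb)) with (ax*bx+az*bz) by (field; lra). lra. }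
  destruct (bis (ax/na) (az/na) (bx/nb) (bz/nb) ca Hv Hw Hc Hvw) as (H1 & H2 & H3 & H4).
  set (nm := sqrt ((ax / na + bx / nb) * (ax / na + bx / nb) + (az / na + bz / nb) * (az / na + bz / nb))) in *.
  split; [exact H2|]. split.
  - replace (ax * ((ax / na + bx / nb) / nm) + az * ((az / na + bz / nb) / nm)) with
      (na * (ax / na * ((ax / na + bx / nb) / nm) + az / na * ((az / na + bz / nb) / nm))) by (field; lra).
    apply Rle_ge. rewrite (Rmult_comm ca). apply Rmult_le_compat_l; lra.
  - replace (bx * ((ax / na + bx / nb) / nm) + bz * ((az / na + bz / nb) / nm)) with
      (nb * (bx / nb * ((ax / na + bx / nb) / nm) + bz / nb * ((az / na + bz / nb) / nm))) by (field; lra).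
    apply Rle_ge. rewrite (Rmult_comm ca). apply Rmult_le_compat_l; lra.
Qed.

Lemma lower (h alpha E : R) (g : pt) :
  0 < h -> 0 < alpha -> alpha <= 1/10 -> ground g -> eps_le alpha g (viewline h) E ->
  2*sin(2*alpha)*(1+sin(2*alpha))/(cos(2*alpha))^2 * h <= E.
Proof.
  intros Hh Ha1 Ha2 Hg HE.
  destruct (trig alpha Ha1 Ha2) as (HS & HS2 & HC & HSC & HCca & Hca & Hca1 & Hapi).
  set (S := sin(2*alpha)) in *. set (C := cos(2*alpha)) in *. set (ca := cos alpha) in *.
  set (cL := 2*S*(1+S)/C^2).
  assert (HcL : 0 < cL) by (unfold cL; unfold Rdiv; apply Rmult_lt_0_compat; [nra| apply Rinv_0_lt_compat; nra]).
  destruct g as [gx gz]. unfold ground in Hg. simpl in Hg. subst gz.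
  set (p0 := (gx, -(cL*h))).
  set (U := fun s : pt => bisu (gx - fst s, 0 - snd s) (fst p0 - fst s, snd p0 - snd s)).
  assert (Key : forall s, snd s = h ->
     fst (U s) * fst (U s) + snd (U s) * snd (U s) = 1 /\
     (gx - fst s) * fst (U s) + (0 - snd s) * snd (U s) >= ca * sqrt ((gx - fst s)*(gx - fst s) + (0 - snd s)*(0 - snd s)) /\
     (fst p0 - fst s) * fst (U s) + (snd p0 - snd s) * snd (U s) >= ca * sqrt ((fst p0 - fst s)*(fst p0 - fst s) + (snd p0 - snd s)*(snd p0 - snd s))).
  { intros [sx sz] Hs. simpl in Hs. subst sz. unfold U. simpl.
    apply (bisu_ok (gx - sx, 0 - h) (gx - sx, -(cL*h) - h) ca Hca); simpl.
    - apply pos_ss; lra.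
    - apply pos_ss. assert (0 < cL*h) by (apply Rmult_lt_0_compat; lra). lra.
    - rewrite <- HCca. replace (0 - h) with (-h) by ring.
      apply (lb_angle S C h (gx - sx) cL); auto. }
  assert (Hadm : forall s, viewline h s -> admissible alpha (gx, 0) s (U s)).
  { intros s Hs. unfold viewline in Hs. destruct (Key s Hs) as (K1 & K2 & K3). split.
    - unfold norm, dot. rewrite K1. apply sqrt_1.
    - apply cone_wedge; auto. simpl. rewrite Hs. apply pos_ss; lra. }
  assert (Hw0 : forall s, viewline h s -> wedge alpha s (U s) p0).
  { intros s Hs. unfold viewline in Hs. destruct (Key s Hs) as (K1 & K2 & K3).
    apply cone_wedge; auto. simpl. rewrite Hs. apply pos_ss. assert (0 < cL*h) by (apply Rmult_lt_0_compat; lra). lra. }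
  pose proof (HE U Hadm (gx, 0) p0 (fun s Hs => proj2 (Hadm s Hs)) Hw0) as Hd.
  unfold Defs.dist, Defs.norm, Defs.dot, p0 in Hd. simpl in Hd.
  replace ((gx - gx) * (gx - gx) + (0 - - (cL * h)) * (0 - - (cL * h))) with ((cL*h)*(cL*h)) in Hd by ring.
  clear Hw0 Hadm Key U HE.
  rewrite sqrt_square in Hd by (left; apply Rmult_lt_0_compat; lra). exact Hd.
Qed.

Lemma unit_of_norm (u : pt) : norm u = 1 -> fst u * fst u + snd u * snd u = 1.
Proof. intro H. unfold norm, dot in H. apply sq_of_sqrt in H; [exact H| apply ss0]. Qed.

Lemma cam_pair (alpha a h : R) (u x y : pt) : 0 < alpha -> alpha <= 1/10 -> norm u = 1 ->
  wedge alpha (a,h) u x -> wedge alpha (a,h) u y ->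
  (fst x - a)*(fst y - a) + (snd x - h)*(snd y - h) >=
  cos(2*alpha)*sqrt((fst x - a)*(fst x - a) + (snd x - h)*(snd x - h))*sqrt((fst y - a)*(fst y - a)+(snd y - h)*(snd y - h)).
Proof.
  intros H1 H2 Hu Hx Hy.
  destruct (trig alpha H1 H2) as (HS & HS2 & HC & HSC & HCca & Hca & Hca1 & Hapi).
  pose proof (wedge_cone alpha (a,h) u x Hapi Hu Hx) as Cx.
  pose proof (wedge_cone alpha (a,h) u y Hapi Hu Hy) as Cy.
  simpl in Cx, Cy. rewrite HCca.
  apply pair_cone with (ux := fst u) (uz := snd u); try lra.
  apply unit_of_norm; exact Hu.
Qed.

Lemma cam_below (alpha a h gx : R) (u x : pt) : 0 < alpha -> alpha <= 1/10 -> 0 < h ->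
  sin(2*alpha)*sin(2*alpha)*(((gx-a)/h)*((gx-a)/h)) < cos(2*alpha)*cos(2*alpha) ->
  admissible alpha (gx,0) (a,h) u -> wedge alpha (a,h) u x ->
  (fst x - a = 0 /\ snd x - h = 0) \/ snd x < h.
Proof.
  intros H1 H2 Hh Hg [Hu Hgw] Hx.
  destruct (trig alpha H1 H2) as (HS & HS2 & HC & HSC & HCca & Hca & Hca1 & Hapi).
  pose proof (cam_pair alpha a h u x (gx,0) H1 H2 Hu Hx Hgw) as P. simpl in P.
  destruct (Rlt_or_le (snd x) h) as [Hl|Hl]; [right; exact Hl|left].
  apply (below (cos(2*alpha)) (sin(2*alpha)) ((gx-a)/h) h); try lra.
  replace ((gx - a)/h*h) with (gx - a) by (field; lra).
  replace (-h) with (0 - h) by ring. exact P.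
Qed.

Lemma cam_tau (alpha a h gx : R) (u x y : pt) : 0 < alpha -> alpha <= 1/10 -> 0 < h ->
  admissible alpha (gx,0) (a,h) u -> wedge alpha (a,h) u x -> wedge alpha (a,h) u y ->
  snd x < h -> snd y < h ->
  ((fst x - a)/(h - snd x) - (fst y - a)/(h - snd y))^2 <=
     (sin(2*alpha))^2*(1+((fst x - a)/(h - snd x))^2)*(1+((fst y - a)/(h - snd y))^2) /\
  cos(2*alpha) * Rabs ((fst x - a)/(h - snd x) - (gx-a)/h) <= sin(2*alpha)*(1 + (fst x - a)/(h - snd x)*((gx-a)/h)).
Proof.
  intros H1 H2 Hh [Hu Hgw] Hx Hy Hxh Hyh.
  destruct (trig alpha H1 H2) as (HS & HS2 & HC & HSC & HCca & Hca & Hca1 & Hapi).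
  pose proof (cam_pair alpha a h u x y H1 H2 Hu Hx Hy) as Pxy.
  pose proof (cam_pair alpha a h u x (gx,0) H1 H2 Hu Hx Hgw) as Pxg.
  simpl in Pxg.
  destruct x as [xx xz]. destruct y as [yx yz]. simpl in *.
  set (rx := h - xz). set (ry := h - yz).
  assert (Hrx : 0 < rx) by (unfold rx; lra). assert (Hry : 0 < ry) by (unfold ry; lra).
  split.
  - refine (proj1 (tau_pair (cos(2*alpha)) (sin(2*alpha)) _ _ rx ry HC HS HSC Hrx Hry _)).
    replace ((xx - a)/rx*rx) with (xx - a) by (field; lra).
    replace ((yx - a)/ry*ry) with (yx - a) by (field; lra).
    replace (-rx) with (xz - h) by (unfold rx; ring). replace (-ry) with (yz - h) by (unfold ry; ring).
    exact Pxy.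
  - refine (proj2 (tau_pair (cos(2*alpha)) (sin(2*alpha)) _ _ rx h HC HS HSC Hrx Hh _)).
    replace ((xx - a)/rx*rx) with (xx - a) by (field; lra).
    replace ((gx - a)/h*h) with (gx - a) by (field; lra).
    replace (-rx) with (xz - h) by (unfold rx; ring). replace (-h) with (0 - h) by ring.
    exact Pxg.
Qed.

Lemma sq_pos (x : R) : x <> 0 -> 0 < x^2.
Proof. intro H. destruct (Rtotal_order x 0) as [Hl|[He|Hg]]; [nra|contradiction|nra]. Qed.

Lemma dist_id (h rp rq t1 t2 s1 s2 : R) : 0 < rp -> 0 < rq ->
  rp*(t1-t2) = 2*h -> rq*(s1-s2) = 2*h ->
  ((t1*rp - s1*rq)^2 + (rq - rp)^2)*((t1-t2)^2*(s1-s2)^2) =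
  4*h^2*((t1*(t2-s2) - t2*(t1-s1))^2 + ((t1-s1)-(t2-s2))^2).
Proof.
  intros Hp Hq E1 E2.
  assert (A : (t1*rp - s1*rq)*((t1-t2)*(s1-s2)) = 2*h*(t1*(s1-s2) - s1*(t1-t2))).
  { transitivity (t1*(rp*(t1-t2))*(s1-s2) - s1*(rq*(s1-s2))*(t1-t2)); [ring|]. rewrite E1, E2. ring. }
  assert (B : (rq - rp)*((t1-t2)*(s1-s2)) = 2*h*((t1-t2) - (s1-s2))).
  { transitivity ((rq*(s1-s2))*(t1-t2) - (rp*(t1-t2))*(s1-s2)); [ring|]. rewrite E1, E2. ring. }
  transitivity (((t1*rp - s1*rq)*((t1-t2)*(s1-s2)))^2 + ((rq - rp)*((t1-t2)*(s1-s2)))^2); [ring|].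
  rewrite A, B. ring.
Qed.

Lemma upper (h alpha a1 gx : R) (u1 u2 p q : pt) :
  0 < h -> 0 < alpha -> alpha <= 1/10 -> 1/2 <= (gx - a1)/h <= 3/2 ->
  admissible alpha (gx,0) (a1,h) u1 -> admissible alpha (gx,0) (a1+2*h,h) u2 ->
  wedge alpha (a1,h) u1 p -> wedge alpha (a1+2*h,h) u2 p ->
  wedge alpha (a1,h) u1 q -> wedge alpha (a1+2*h,h) u2 q ->
  Defs.dist p q <= 172/100 * (2*sin(2*alpha)*(1+sin(2*alpha))/(cos(2*alpha))^2 * h).
Proof.
  intros Hh H1 H2 Hgam Ad1 Ad2 Wp1 Wp2 Wq1 Wq2.
  destruct (trig alpha H1 H2) as (HS & HS2 & HC & HSC & HCca & Hca & Hca1 & Hapi).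
  assert (HCb : 9/10 < cos(2*alpha)) by nra.
  assert (Eg2 : (gx - (a1 + 2*h))/h = (gx - a1)/h - 2) by (field; lra).
  assert (Hg1 : sin(2*alpha)*sin(2*alpha)*(((gx-a1)/h)*((gx-a1)/h)) < cos(2*alpha)*cos(2*alpha)).
  { set (g := (gx-a1)/h) in *. set (S := sin(2*alpha)) in *. set (C := cos(2*alpha)) in *.
    assert (g*g <= 9/4) by nra. assert (S*S <= 1/25) by nra. nra. }
  assert (Hg2 : sin(2*alpha)*sin(2*alpha)*(((gx-(a1+2*h))/h)*((gx-(a1+2*h))/h)) < cos(2*alpha)*cos(2*alpha)).
  { rewrite Eg2. set (g := (gx-a1)/h) in *. set (S := sin(2*alpha)) in *. set (C := cos(2*alpha)) in *.
    assert ((g-2)*(g-2) <= 9/4) by nra. assert (S*S <= 1/25) by nra. nra. }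
  assert (Hpz : snd p < h).
  { destruct (cam_below alpha a1 h gx u1 p H1 H2 Hh Hg1 Ad1 Wp1) as [[E1 E2]|Hl]; [|exact Hl].
    destruct (cam_below alpha (a1+2*h) h gx u2 p H1 H2 Hh Hg2 Ad2 Wp2) as [[F1 F2]|Hl]; lra. }
  assert (Hqz : snd q < h).
  { destruct (cam_below alpha a1 h gx u1 q H1 H2 Hh Hg1 Ad1 Wq1) as [[E1 E2]|Hl]; [|exact Hl].
    destruct (cam_below alpha (a1+2*h) h gx u2 q H1 H2 Hh Hg2 Ad2 Wq2) as [[F1 F2]|Hl]; lra. }
  destruct (cam_tau alpha a1 h gx u1 p q H1 H2 Hh Ad1 Wp1 Wq1 Hpz Hqz) as [T1a T1b].
  destruct (cam_tau alpha a1 h gx u1 q p H1 H2 Hh Ad1 Wq1 Wp1 Hqz Hpz) as [_ T1c].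
  destruct (cam_tau alpha (a1+2*h) h gx u2 p q H1 H2 Hh Ad2 Wp2 Wq2 Hpz Hqz) as [T2a T2b].
  destruct (cam_tau alpha (a1+2*h) h gx u2 q p H1 H2 Hh Ad2 Wq2 Wp2 Hqz Hpz) as [_ T2c].
  rewrite Eg2 in T2b, T2c.
  destruct p as [px pz]. destruct q as [qx qz]. simpl in *.
  set (S := sin(2*alpha)) in *. set (C := cos(2*alpha)) in *.
  set (gam := (gx - a1)/h) in *.
  set (rp := h - pz) in *. set (rq := h - qz) in *.
  assert (Hrp : 0 < rp) by (unfold rp; lra). assert (Hrq : 0 < rq) by (unfold rq; lra).
  set (t1 := (px - a1)/rp) in *. set (t2 := (px - (a1 + 2*h))/rp) in *.
  set (s1 := (qx - a1)/rq) in *. set (s2 := (qx - (a1 + 2*h))/rq) in *.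
  assert (Hx0 : -1/2 <= gam - 1 <= 1/2) by lra.
  replace gam with (1 + (gam - 1)) in T1b, T1c by ring.
  replace (gam - 2) with ((gam - 1) - 1) in T2b, T2c by ring.
  pose proof (core_bound S C (gam - 1) t1 t2 s1 s2 HS HS2 HC HSC Hx0 T1b T1c T2b T2c T1a T2a) as Hcore.
  assert (Ep : rp*(t1-t2) = 2*h) by (unfold t1, t2; field; lra).
  assert (Eq : rq*(s1-s2) = 2*h) by (unfold s1, s2; field; lra).
  assert (Epx : px - qx = t1*rp - s1*rq) by (unfold t1, s1; field; lra).
  assert (Epz : pz - qz = rq - rp) by (unfold rp, rq; ring).
  pose proof (dist_id h rp rq t1 t2 s1 s2 Hrp Hrq Ep Eq) as Hid.
  set (N := (t1 * (t2 - s2) - t2 * (t1 - s1)) ^ 2 + (t1 - s1 - (t2 - s2)) ^ 2) in *.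
  set (D2 := (t1-t2)^2*(s1-s2)^2) in *.
  assert (HD : 0 < D2).
  { unfold D2. assert (t1 - t2 <> 0) by (intro Hz; rewrite Hz in Ep; lra).
    assert (s1 - s2 <> 0) by (intro Hz; rewrite Hz in Eq; lra).
    apply Rmult_lt_0_compat; apply sq_pos; auto. }
  set (d2 := (t1*rp - s1*rq)^2 + (rq - rp)^2) in *.
  assert (Hd2' : d2 <= ((172/100)*(2*S*(1+S)/C^2*h))^2).
  { assert (HC4 : 0 < C^4) by (apply pow_lt; lra).
    apply (Rmult_le_reg_r (D2*C^4)); [apply Rmult_lt_0_compat; lra|].
    replace (d2*(D2*C^4)) with ((d2*D2)*C^4) by ring. rewrite Hid.
    replace (((172/100)*(2*S*(1+S)/C^2*h))^2*(D2*C^4)) with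
      (4*h^2*((172/100)^2*(1+S)^2*S^2*D2)) by (field; lra).
    replace (4*h^2*N*C^4) with (4*h^2*(C^4*N)) by ring.
    apply Rmult_le_compat_l; [nra|].
    unfold D2. replace ((172 / 100) ^ 2 * (1 + S) ^ 2 * S ^ 2 * ((t1 - t2) ^ 2 * (s1 - s2) ^ 2)) with
      ((172 / 100) ^ 2 * (1 + S) ^ 2 * S ^ 2 * (t1 - t2) ^ 2 * (s1 - s2) ^ 2) by ring.
    exact Hcore. }
  unfold Defs.dist, Defs.norm, Defs.dot. cbn [fst snd].
  rewrite Epx, Epz.
  apply le_of_sq.
  - assert (0 < C^2) by (apply pow_lt; lra).
    apply Rmult_le_pos; [lra|]. apply Rmult_le_pos; [|lra]. unfold Rdiv.
    apply Rmult_le_pos; [nra| left; apply Rinv_0_lt_compat; lra].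
  - rewrite sqrt_sqrt by apply ss0.
    replace ((t1 * rp - s1 * rq) * (t1 * rp - s1 * rq) + (rq - rp) * (rq - rp)) with d2 by (unfold d2; ring).
    eapply Rle_trans; [exact Hd2'|]. right. field. lra.
Qed.

Theorem theorem3 (h alpha : R) (g : pt) :
  0 < h -> 0 < alpha -> alpha <= 1/10 -> ground g ->
  forall E : R, eps_le alpha g (viewline h) E ->
  exists si sj, grid h si /\ grid h sj /\
    eps_le alpha g (pair_set si sj) (172/100 * E).
Proof.
  intros Hh H1 H2 Hg E HE.
  pose proof (lower h alpha E g Hh H1 H2 Hg HE) as Hlow.
  destruct g as [gx gz]. unfold ground in Hg. simpl in Hg. subst gz.
  destruct (archimed (gx/h - 1/2)) as [A1 A2].
  set (n := up (gx/h - 1/2)) in *.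
  exists (IZR (n-1) * h, h), (IZR (n+1) * h, h).
  split; [exists (n-1)%Z; reflexivity|]. split; [exists (n+1)%Z; reflexivity|].
  intros u Hadm p q Hp Hq.
  set (a1 := IZR (n-1) * h).
  assert (Ea2 : IZR (n+1) * h = a1 + 2*h) by (unfold a1; rewrite plus_IZR, minus_IZR; ring).
  assert (Ad1 := Hadm (a1,h) (or_introl eq_refl)).
  assert (Ad2 := Hadm (IZR (n+1) * h, h) (or_intror eq_refl)).
  assert (Wp1 := Hp (a1,h) (or_introl eq_refl)).
  assert (Wp2 := Hp (IZR (n+1) * h, h) (or_intror eq_refl)).
  assert (Wq1 := Hq (a1,h) (or_introl eq_refl)).
  assert (Wq2 := Hq (IZR (n+1) * h, h) (or_intror eq_refl)).
  rewrite Ea2 in Ad2, Wp2, Wq2.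
  assert (Hgam : 1/2 <= (gx - a1)/h <= 3/2).
  { assert (E1 : (gx - a1)/h = gx/h - IZR n + 1) by (unfold a1; rewrite minus_IZR; field; lra).
    rewrite E1. lra. }
  pose proof (upper h alpha a1 gx (u (a1,h)) (u (a1 + 2*h, h)) p q Hh H1 H2 Hgam Ad1 Ad2 Wp1 Wp2 Wq1 Wq2) as Hup.
  lra.
Qed.
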